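(* Consider the planar $n$-body problem ($n\ge3$) with masses $m=(m_1,\dots,m_n)$ as in the context, and let $q_{m,e}$ be the elliptic Euler–Moulton solution with eccentricity $e\in[0,1)$: $q_i(t)=r(t)R(\theta(t))a_i$, $p_i=m_i\dot q_i$, where $r(t)=p/(1+e\cos\theta(t))$ is a Kepler ellipse with true anomaly $\theta(t)$. In the symplectic coordinates $(\bar Z,\bar W_1,\dots,\bar W_{n-2},\bar z,\bar w_1,\dots,\bar w_{n-2})$ with independent variable $\theta$ described in the context (center of mass fixed at the origin), the linearized Hamiltonian system at $q_{m,e}$ splits into $n-1$ mutually decoupled $4$-dimensional linear Hamiltonian systems: one in the variables $(\bar Z,\bar z)$ with quadratic Hamiltonian $$\tfrac12|\bar Z|^2+\bar z\cdot J\bar Z+\tfrac12\bar z^T\begin{pmatrix}-\frac{2-e\cos\theta}{1+e\cos\theta}&0\\0&1\end{pmatrix}\bar z,$$ which is the linearized system of the Kepler $2$-body problem at the Kepler elliptic orbit, and for each $1\le i\le n-2$ one in the variables $(\bar W_i,\bar w_i)$ with quadratic Hamiltonian $$\tfrac12|\bar W_i|^2+\bar w_i\cdot J\bar W_i+\tfrac12\bar w_i^T\begin{pmatrix}-\frac{2\beta_i+2-e\cos\theta}{1+e\cos\theta}&0\\0&\frac{\beta_i+1+e\cos\theta}{1+e\cos\theta}\end{pmatrix}\bar w_i,$$ which is the essential part of the linearized Hamiltonian system at an elliptic Euler collinear solution of the $3$-body problem with eccentricity $e$ and mass parameter $\beta_i$, where $\beta_i=-\lambda_{i+2}/\mu\ge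 0$.
   Context: Setup: $m_1,\dots,m_n>0$, $\sum m_i=1$, $\tilde M=\mathrm{diag}(m_1,\dots,m_n)$; $a_i=(a_{ix},0)^T$, $a_{1x}<\dots<a_{nx}$, is the collinear central configuration with $\sum m_ia_{ix}=0$, $\sum m_ia_{ix}^2=1$, $\sum_{j\ne i}m_j(a_{jx}-a_{ix})/|a_{jx}-a_{ix}|^3=\mu a_{ix}$, $\mu=\sum_{i<j}m_im_j/|a_{ix}-a_{jx}|$. $B_{ij}=m_im_j/|a_{ix}-a_{jx}|^3$ ($i\neq j$), $B_{ii}=-\sum_{j\ne i}B_{ij}$, $D=\mu I_n+\tilde M^{-1}B$ with eigenvalues $\lambda_1=\mu>\lambda_2=0\ge\lambda_3\ge\dots\ge\lambda_n$; $\beta_i=-\lambda_{i+2}/\mu$. Choose eigenvectors $v_k=(b_{1k},\dots,b_{nk})^T$ of $D$ for $\lambda_k$ ($3\le k\le n$) such that, with $v_1=(1,\dots,1)^T$, $v_2=(a_{1x},\dots,a_{nx})^T$, $v_i^T\tilde Mv_j=\delta_{ij}$. $J=\begin{pmatrix}0&-1\\1&0\end{pmatrix}$, $R(\theta)=\begin{pmatrix}\cos\theta&-\sin\theta\\ \sin\theta&\cos\theta\end{pmatrix}$. Coordinates: $q_i=a_{ix}z+\sum_{k=3}^nb_{ik}w_{k-2}$, $p_i=m_i(a_{ix}Z+\sum_{k=3}^nb_{ik}W_{k-2})$ ($z,w_l,Z,W_l\in\mathbb{R}^2$, center of mass and total momentum zero). With $p>0$, $\sigma=(\mu p)^{1/4}$,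 $r(t)=p/(1+e\cos\theta(t))$, $r^2\dot\theta=\sigma^2$, the barred coordinates are defined by $x=\frac{r}{\sigma}R(\theta)\bar x$, $X=R(\theta)\big(\frac{\sigma}{r}\bar X+\frac{\dot r}{\sigma}\bar x\big)$ for each pair $(x,X)\in\{(z,Z),(w_l,W_l)\}$, and $\theta$ is used as independent variable. Hamilton's equations: positions' derivative $=\partial H/\partial(\text{momentum})$, momenta's derivative $=-\partial H/\partial(\text{position})$. *)

(* Defs.v *)
From Stdlib Require Import Reals Lra Lia List Arith.
Open Scope R_scope.

Definition vec2 : Type := (R * R)%type.
Definition vzero : vec2 := (0, 0).
Definition vadd (u v : vec2) : vec2 := (fst u + fst v, snd u + snd v).
Definition vsub (u v : vec2) : vec2 := (fst u - fst v, snd u - snd v).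
Definition vscal (c : R) (u : vec2) : vec2 := (c * fst u, c * snd u).
Definition vopp (u : vec2) : vec2 := (- fst u, - snd u).
Definition dot (u v : vec2) : R := fst u * fst v + snd u * snd v.
Definition vnorm (u : vec2) : R := sqrt (dot u u).
(** J = [[0,-1],[1,0]] acting on column vectors *)
Definition Jmul (u : vec2) : vec2 := (- snd u, fst u).
Definition rot (th : R) (u : vec2) : vec2 :=
  (cos th * fst u - sin th * snd u, sin th * fst u + cos th * snd u).

(** * Finite sums over the index range lo..hi (inclusive; empty if hi < lo) *)
Definition rsum (lo hi : nat) (f : nat -> R) : R :=
  fold_right Rplus 0 (map f (seq lo (S hi - lo))).
Definition vsum (lo hi : nat) (f : nat -> vec2) : vec2 :=
  fold_right vadd vzero (map f (seq lo (S hi - lo))).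

Definition has_vderiv (f : R -> vec2) (t : R) (g : vec2) : Prop :=
  derivable_pt_lim (fun s => fst (f s)) t (fst g) /\
  derivable_pt_lim (fun s => snd (f s)) t (snd g).

Definition is_grad2 (f : vec2 -> R) (v : vec2) (g : vec2) : Prop :=
  derivable_pt_lim (fun s => f (vadd v (s, 0))) 0 (fst g) /\
  derivable_pt_lim (fun s => f (vadd v (0, s))) 0 (snd g).

Definition HamSys (H : R -> vec2 -> vec2 -> R) (x X : R -> vec2) : Prop :=
  forall th : R, exists gX gx : vec2,
    is_grad2 (fun Y => H th (x th) Y) (X th) gX /\
    is_grad2 (fun y => H th y (X th)) (x th) gx /\
    has_vderiv x th gX /\ has_vderiv X th (vopp gx).

(** * The planar n-body problem (bodies indexed 1..n) *)
(** Newtonian force on body i: -dH/dq_i = dU/dq_i, where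
    H = sum |p_i|^2/(2 m_i) - U,  U = sum_{i<j} m_i m_j / |q_i - q_j|. *)
Definition force (n : nat) (m : nat -> R) (i : nat) (Q : nat -> vec2) : vec2 :=
  vsum 1 n (fun j => if Nat.eqb j i then vzero else
    vscal (m i * m j / (vnorm (vsub (Q j) (Q i))) ^ 3) (vsub (Q j) (Q i))).

(** Linearized Hamiltonian system of the n-body problem along a curve q(t):
    dq_i' = dp_i / m_i,  dp_i' = D(force_i)(q(t))[dq(t)]  (directional derivative). *)
Definition LinNBody (n : nat) (m : nat -> R) (q : nat -> R -> vec2)
    (dq dp : nat -> R -> vec2) : Prop :=
  forall (t : R) (i : nat), (1 <= i <= n)%nat ->
    has_vderiv (dq i) t (vscal (/ m i) (dp i t)) /\
    exists g : vec2,
      has_vderiv (fun s => force n m i (fun j => vadd (q j t) (vscal s (dq j t)))) 0 g /\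
      has_vderiv (dp i) t g.

Definition mu (n : nat) (m a : nat -> R) : R :=
  rsum 1 n (fun i => rsum (S i) n (fun j => m i * m j / Rabs (a i - a j))).

Definition Bmat (n : nat) (m a : nat -> R) (i j : nat) : R :=
  if Nat.eqb i j then
    - rsum 1 n (fun l => if Nat.eqb l i then 0 else m i * m l / Rabs (a i - a l) ^ 3)
  else m i * m j / Rabs (a i - a j) ^ 3.

Definition Dmat (n : nat) (m a : nat -> R) (i j : nat) : R :=
  (if Nat.eqb i j then mu n m a else 0) + Bmat n m a i j / m i.

Definition vvec (a : nat -> R) (b : nat -> nat -> R) (k i : nat) : R :=
  if Nat.eqb k 1 then 1 else if Nat.eqb k 2 then a i else b i k.

Definition rtheta (p e th : R) : R := p / (1 + e * cos th).
Definition sigmaK (n : nat) (m a : nat -> R) (p : R) : R := sqrt (sqrt (mu n m a * p)).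

Definition EMsol (a : nat -> R) (p e : R) (theta : R -> R) (i : nat) (t : R) : vec2 :=
  vscal (rtheta p e (theta t)) (rot (theta t) (a i, 0)).

Definition unbar_pos (sg p e : R) (theta : R -> R) (xb : R -> vec2) (t : R) : vec2 :=
  vscal (rtheta p e (theta t) / sg) (rot (theta t) (xb (theta t))).
Definition unbar_mom (sg p e : R) (theta rdot : R -> R) (xb Xb : R -> vec2) (t : R) : vec2 :=
  rot (theta t) (vadd (vscal (sg / rtheta p e (theta t)) (Xb (theta t)))
                      (vscal (rdot t / sg) (xb (theta t)))).

Definition pert_q (n : nat) (a : nat -> R) (b : nat -> nat -> R)
    (z : R -> vec2) (w : nat -> R -> vec2) (i : nat) (t : R) : vec2 :=
  vadd (vscal (a i) (z t)) (vsum 3 n (fun k => vscal (b i k) (w (k - 2)%nat t))).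
Definition pert_p (n : nat) (m a : nat -> R) (b : nat -> nat -> R)
    (Z : R -> vec2) (W : nat -> R -> vec2) (i : nat) (t : R) : vec2 :=
  vscal (m i) (vadd (vscal (a i) (Z t)) (vsum 3 n (fun k => vscal (b i k) (W (k - 2)%nat t)))).

Definition quadH (k1 k2 : R) (xb Xb : vec2) : R :=
  / 2 * dot Xb Xb + dot xb (Jmul Xb) + / 2 * (k1 * fst xb ^ 2 + k2 * snd xb ^ 2).

Definition H_kepler (e : R) (th : R) (zb Zb : vec2) : R :=
  quadH (- ((2 - e * cos th) / (1 + e * cos th))) 1 zb Zb.

Definition H_euler (beta e : R) (th : R) (wb Wb : vec2) : R :=
  quadH (- ((2 * beta + 2 - e * cos th) / (1 + e * cos th)))
        ((beta + 1 + e * cos th) / (1 + e * cos th)) wb Wb.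

(* Main.v *)
Require Import Defs.
From Stdlib Require Import Reals Lra Lia List Arith.
From Stdlib Require Import FunctionalExtensionality Ranalysis5 ClassicalEpsilon.
From Coquelicot Require Import Coquelicot.
Open Scope R_scope.

Lemma vec_eq (u v : vec2) : fst u = fst v -> snd u = snd v -> u = v.
Proof. destruct u, v; simpl; intros; subst; reflexivity. Qed.

Ltac veq := apply vec_eq; unfold vadd, vscal, vsub, vopp, vzero, rot, Jmul, dot in *; simpl in *.
Definition lsum (l : list nat) (f : nat -> R) := fold_right Rplus 0 (map f l).
Definition lvsum (l : list nat) (f : nat -> vec2) := fold_right vadd vzero (map f l).

Lemma rsum_l lo hi f : rsum lo hi f = lsum (seq lo (S hi - lo)) f.
Proof. reflexivity. Qed.
Lemma vsum_l lo hi f : vsum lo hi f = lvsum (seq lo (S hi - lo)) f.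
Proof. reflexivity. Qed.

Lemma in_rng lo hi i : In i (seq lo (S hi - lo)) <-> (lo <= i <= hi)%nat.
Proof. rewrite in_seq. lia. Qed.

Lemma lsum_ext l f g : (forall i, In i l -> f i = g i) -> lsum l f = lsum l g.
Proof. unfold lsum; induction l; simpl; intros; auto. rewrite H, IHl; auto. Qed.
Lemma lvsum_ext l f g : (forall i, In i l -> f i = g i) -> lvsum l f = lvsum l g.
Proof. unfold lvsum; induction l; simpl; intros; auto. rewrite H, IHl; auto. Qed.

Lemma rsum_ext lo hi f g : (forall i, (lo <= i <= hi)%nat -> f i = g i) -> rsum lo hi f = rsum lo hi g.
Proof. intros; apply lsum_ext; intros; apply H, in_rng; auto. Qed.
Lemma vsum_ext lo hi f g : (forall i, (lo <= i <= hi)%nat -> f i = g i) -> vsum lo hi f = vsum lo hi g.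
Proof. intros; apply lvsum_ext; intros; apply H, in_rng; auto. Qed.

Lemma lvsum_fst l f : fst (lvsum l f) = lsum l (fun i => fst (f i)).
Proof. unfold lsum, lvsum in *; induction l; simpl; auto. unfold lvsum, lsum in *; simpl. rewrite IHl; auto. Qed.
Lemma lvsum_snd l f : snd (lvsum l f) = lsum l (fun i => snd (f i)).
Proof. unfold lsum, lvsum in *; induction l; simpl; auto. unfold lvsum, lsum in *; simpl. rewrite IHl; auto. Qed.

Lemma lvsum_lin (L : vec2 -> vec2) l f :
  (forall u v, L (vadd u v) = vadd (L u) (L v)) -> L vzero = vzero ->
  L (lvsum l f) = lvsum l (fun i => L (f i)).
Proof. unfold lsum, lvsum in *; intros HA H0; induction l; simpl; auto. unfold lvsum in *; simpl. rewrite HA, IHl; auto. Qed.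
Lemma vsum_lin (L : vec2 -> vec2) lo hi f :
  (forall u v, L (vadd u v) = vadd (L u) (L v)) -> L vzero = vzero ->
  L (vsum lo hi f) = vsum lo hi (fun i => L (f i)).
Proof. apply lvsum_lin. Qed.

Lemma lsum_lin (L : R -> R) l f :
  (forall u v, L (u + v) = L u + L v) -> L 0 = 0 ->
  L (lsum l f) = lsum l (fun i => L (f i)).
Proof. unfold lsum, lvsum in *; intros HA H0; induction l; simpl; auto. unfold lsum in *; simpl. rewrite HA, IHl; auto. Qed.

Lemma lvsum_add l f g : lvsum l (fun i => vadd (f i) (g i)) = vadd (lvsum l f) (lvsum l g).
Proof. unfold lsum, lvsum in *; induction l; simpl. veq; ring. unfold lvsum in *; simpl. rewrite IHl.
  veq; ring. Qed.
Lemma vsum_add lo hi f g : vsum lo hi (fun i => vadd (f i) (g i)) = vadd (vsum lo hi f) (vsum lo hi g).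
Proof. apply lvsum_add. Qed.
Lemma lsum_add l f g : lsum l (fun i => f i + g i) = lsum l f + lsum l g.
Proof. unfold lsum, lvsum in *; induction l; simpl. ring. unfold lsum in *; simpl. rewrite IHl. ring. Qed.
Lemma rsum_add lo hi f g : rsum lo hi (fun i => f i + g i) = rsum lo hi f + rsum lo hi g.
Proof. apply lsum_add. Qed.
Lemma rsum_scal lo hi c f : rsum lo hi (fun i => c * f i) = c * rsum lo hi f.
Proof. symmetry. apply (lsum_lin (fun x => c * x)); intros; ring. Qed.

Lemma lvsum_scal_const l c v : lvsum l (fun i => vscal (c i) v) = vscal (lsum l c) v.
Proof. unfold lsum, lvsum in *; induction l; simpl. veq; ring. unfold lvsum, lsum in *; simpl. rewrite IHl.
  veq; ring. Qed.
Lemma vsum_scal_const lo hi c v : vsum lo hi (fun i => vscal (c i) v) = vscal (rsum lo hi c) v.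
Proof. apply lvsum_scal_const. Qed.

Lemma lvsum_zero l : lvsum l (fun _ => vzero) = vzero.
Proof. unfold lvsum; induction l; simpl; auto. rewrite IHl. veq; ring. Qed.
Lemma lvsum_swap l1 l2 (F : nat -> nat -> vec2) :
  lvsum l1 (fun i => lvsum l2 (fun k => F i k)) = lvsum l2 (fun k => lvsum l1 (fun i => F i k)).
Proof. induction l1.
  - simpl. symmetry. apply lvsum_zero.
  - transitivity (vadd (lvsum l2 (fun k => F a k)) (lvsum l1 (fun i => lvsum l2 (fun k => F i k)))).
    reflexivity. rewrite IHl1. rewrite <- lvsum_add. reflexivity. Qed.
Lemma vsum_swap lo hi lo' hi' (F : nat -> nat -> vec2) :
  vsum lo hi (fun i => vsum lo' hi' (fun k => F i k)) = vsum lo' hi' (fun k => vsum lo hi (fun i => F i k)).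
Proof. apply lvsum_swap. Qed.

Lemma lsum_zero l : lsum l (fun _ => 0) = 0.
Proof. unfold lsum; induction l; simpl; auto. rewrite IHl; ring. Qed.
Lemma lsum_cons a l f : lsum (a :: l) f = f a + lsum l f.
Proof. reflexivity. Qed.
Lemma lvsum_cons a l f : lvsum (a :: l) f = vadd (f a) (lvsum l f).
Proof. reflexivity. Qed.
Lemma lsum_delta l i x : NoDup l -> In i l -> lsum l (fun j => if Nat.eqb j i then x else 0) = x.
Proof. induction l; intros ND Hi. destruct Hi. inversion ND; subst.
  rewrite lsum_cons. destruct Hi as [->|Hi].
  - rewrite Nat.eqb_refl. rewrite (lsum_ext _ _ (fun _ => 0)). 
    + rewrite lsum_zero; ring.
    + intros j Hj. destruct (Nat.eqb_spec j i); subst; tauto.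
  - destruct (Nat.eqb_spec a i); subst; [tauto|]. rewrite IHl; auto. ring. Qed.
Lemma rsum_delta lo hi i x : (lo <= i <= hi)%nat -> rsum lo hi (fun j => if Nat.eqb j i then x else 0) = x.
Proof. intros; apply lsum_delta. apply seq_NoDup. apply in_rng; auto. Qed.


Lemma dext f g t a : (forall s, f s = g s) -> derivable_pt_lim f t a -> derivable_pt_lim g t a.
Proof. intros. replace g with f; auto. apply functional_extensionality; auto. Qed.
Lemma deq f t a b : derivable_pt_lim f t a -> a = b -> derivable_pt_lim f t b.
Proof. intros; subst; auto. Qed.

Lemma dmul f g t a b : derivable_pt_lim f t a -> derivable_pt_lim g t b ->
  derivable_pt_lim (fun s => f s * g s) t (a * g t + f t * b).
Proof. intros; exact (derivable_pt_lim_mult f g t a b H H0). Qed.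
Lemma dadd f g t a b : derivable_pt_lim f t a -> derivable_pt_lim g t b ->
  derivable_pt_lim (fun s => f s + g s) t (a + b).
Proof. intros; exact (derivable_pt_lim_plus f g t a b H H0). Qed.
Lemma dsub f g t a b : derivable_pt_lim f t a -> derivable_pt_lim g t b ->
  derivable_pt_lim (fun s => f s - g s) t (a - b).
Proof. intros; exact (derivable_pt_lim_minus f g t a b H H0). Qed.
Lemma dopp f t a : derivable_pt_lim f t a -> derivable_pt_lim (fun s => - f s) t (- a).
Proof. intros; exact (derivable_pt_lim_opp f t a H). Qed.
Lemma dconst c t : derivable_pt_lim (fun _ => c) t 0.
Proof. exact (derivable_pt_lim_const c t). Qed.
Lemma did t : derivable_pt_lim (fun s => s) t 1.
Proof. exact (derivable_pt_lim_id t). Qed.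
Lemma dcomp f g t a b : derivable_pt_lim g t a -> derivable_pt_lim f (g t) b ->
  derivable_pt_lim (fun s => f (g s)) t (b * a).
Proof. intros; exact (derivable_pt_lim_comp g f t a b H H0). Qed.
Lemma dcos g t a : derivable_pt_lim g t a -> derivable_pt_lim (fun s => cos (g s)) t (- sin (g t) * a).
Proof. intros. apply (dcomp cos g t a (- sin (g t))); auto. apply derivable_pt_lim_cos. Qed.
Lemma dsin g t a : derivable_pt_lim g t a -> derivable_pt_lim (fun s => sin (g s)) t (cos (g t) * a).
Proof. intros. apply (dcomp sin g t a (cos (g t))); auto. apply derivable_pt_lim_sin. Qed.
Lemma dcmul c f t a : derivable_pt_lim f t a -> derivable_pt_lim (fun s => c * f s) t (c * a).
Proof. intros. replace (c * a) with (0 * f t + c * a) by ring. apply dmul; auto. apply dconst. Qed.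
Lemma dinv f t a : derivable_pt_lim f t a -> f t <> 0 ->
  derivable_pt_lim (fun s => / f s) t (- a / (f t)^2).
Proof. intros. pose proof (derivable_pt_lim_div (fun _ => 1) f t 0 a (dconst 1 t) H H0).
  eapply dext; [|eapply deq; [exact H1|]]. intros; unfold div_fct; simpl; unfold Rdiv; ring.
  unfold Rsqr; simpl; field; auto. Qed.
Lemma hv_unique f t g1 g2 : has_vderiv f t g1 -> has_vderiv f t g2 -> g1 = g2.
Proof. intros [A B] [C D]. apply vec_eq; eapply uniqueness_limite; eauto. Qed.
Lemma hv_eq f t g1 g2 : has_vderiv f t g1 -> g1 = g2 -> has_vderiv f t g2.
Proof. intros; subst; auto. Qed.
Lemma hv_ext f g t d : (forall s, f s = g s) -> has_vderiv f t d -> has_vderiv g t d.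
Proof. intros. replace g with f; auto. apply functional_extensionality; auto. Qed.
Lemma hv_add f g t a b : has_vderiv f t a -> has_vderiv g t b ->
  has_vderiv (fun s => vadd (f s) (g s)) t (vadd a b).
Proof. intros [A B] [C D]; split; simpl; [apply (dadd _ _ _ _ _ A C)| apply (dadd _ _ _ _ _ B D)]. Qed.
Lemma hv_sub f g t a b : has_vderiv f t a -> has_vderiv g t b ->
  has_vderiv (fun s => vsub (f s) (g s)) t (vsub a b).
Proof. intros [A B] [C D]; split; simpl; [apply (dsub _ _ _ _ _ A C)| apply (dsub _ _ _ _ _ B D)]. Qed.
Lemma hv_scal h f t a F : derivable_pt_lim h t a -> has_vderiv f t F ->
  has_vderiv (fun s => vscal (h s) (f s)) t (vadd (vscal a (f t)) (vscal (h t) F)).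
Proof. intros H [A B]; split; simpl; [apply (dmul _ _ _ _ _ H A)|apply (dmul _ _ _ _ _ H B)]. Qed.
Lemma hv_cscal c f t F : has_vderiv f t F ->
  has_vderiv (fun s => vscal c (f s)) t (vscal c F).
Proof. intros [A B]; split; simpl; apply dcmul; auto. Qed.
Lemma hv_comp f g t a F : derivable_pt_lim g t a -> has_vderiv f (g t) F ->
  has_vderiv (fun s => f (g s)) t (vscal a F).
Proof. intros H [A B]; split; simpl; rewrite Rmult_comm;
  [apply (dcomp (fun y => fst (f y)) g) | apply (dcomp (fun y => snd (f y)) g)]; auto. Qed.
Lemma hv_rot th f t w F : derivable_pt_lim th t w -> has_vderiv f t F ->
  has_vderiv (fun s => rot (th s) (f s)) t
    (rot (th t) (vadd F (vscal w (Jmul (f t))))).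
Proof. intros H [A B]. unfold rot, vadd, vscal, Jmul; split; simpl.
  - eapply deq. apply dsub; apply dmul; try apply dcos; try apply dsin; eauto. simpl; ring.
  - eapply deq. apply dadd; apply dmul; try apply dcos; try apply dsin; eauto. simpl; ring.
Qed.
Lemma hv_lvsum l (F : nat -> R -> vec2) G t :
  (forall j, In j l -> has_vderiv (F j) t (G j)) ->
  has_vderiv (fun s => lvsum l (fun j => F j s)) t (lvsum l G).
Proof. induction l; intros H.
  - split; simpl; apply dconst.
  - simpl. apply (hv_add (F a) (fun s => lvsum l (fun j => F j s))); auto with datatypes.
Qed.
Lemma hv_vsum lo hi (F : nat -> R -> vec2) G t :
  (forall j, (lo <= j <= hi)%nat -> has_vderiv (F j) t (G j)) ->
  has_vderiv (fun s => vsum lo hi (fun j => F j s)) t (vsum lo hi G).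
Proof. intros; apply hv_lvsum. intros; apply H, in_rng; auto. Qed.

Definition Pf' (u v : vec2) : vec2 := vsub v (vscal (3 * dot u v) u).
Definition Pf (th : R) (v : vec2) : vec2 := Pf' (cos th, sin th) v.
Definition Pbar (w : vec2) : vec2 := (-2 * fst w, snd w).

Lemma cs1 th : cos th ^ 2 + sin th ^ 2 = 1.
Proof. pose proof (sin2_cos2 th). unfold Rsqr in H. simpl. lra. Qed.

Lemma dot_u_rot th w : dot (cos th, sin th) (rot th w) = fst w.
Proof. unfold dot, rot; simpl.
  replace (cos th * (cos th * fst w - sin th * snd w) + sin th * (sin th * fst w + cos th * snd w))
    with ((cos th ^ 2 + sin th ^ 2) * fst w) by ring. rewrite cs1; ring. Qed.

Lemma Pf_rot th c w : Pf th (vscal c (rot th w)) = rot th (vscal c (Pbar w)).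
Proof. unfold Pf, Pf'.
  replace (dot (cos th, sin th) (vscal c (rot th w))) with (c * dot (cos th, sin th) (rot th w))
    by (unfold dot, vscal; simpl; ring).
  rewrite dot_u_rot. unfold Pbar. veq; ring. Qed.

Lemma rot_inv th v : rot (- th) (rot th v) = v.
Proof. unfold rot. rewrite cos_neg, sin_neg. veq; pose proof (cs1 th).
  - replace (cos th * (cos th * fst v - sin th * snd v) - - sin th * (sin th * fst v + cos th * snd v))
     with ((cos th ^ 2 + sin th ^ 2) * fst v) by ring. rewrite H; ring.
  - replace (- sin th * (cos th * fst v - sin th * snd v) + cos th * (sin th * fst v + cos th * snd v))
     with ((cos th ^ 2 + sin th ^ 2) * snd v) by ring. rewrite H; ring. Qed.

Lemma rot_inj th u v : rot th u = rot th v -> u = v.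
Proof. intros. rewrite <- (rot_inv th u), <- (rot_inv th v), H. auto. Qed.

Lemma grad_quadH k1 k2 x X :
  is_grad2 (fun Y => quadH k1 k2 x Y) X (fst X + snd x, snd X - fst x) /\
  is_grad2 (fun y => quadH k1 k2 y X) x (- snd X + k1 * fst x, fst X + k2 * snd x).
Proof. destruct x as [x1 x2], X as [X1 X2]. unfold is_grad2, quadH, dot, Jmul, vadd; simpl.
  repeat split; apply is_derive_Reals; auto_derive; auto. all: field. Qed.

Lemma is_grad2_unique f v g1 g2 : is_grad2 f v g1 -> is_grad2 f v g2 -> g1 = g2.
Proof. intros [A B] [C D]; apply vec_eq; eapply uniqueness_limite; eauto. Qed.

Lemma HamSys_quad (H : R -> vec2 -> vec2 -> R) K1 K2 xb Xb :
  (forall th y Y, H th y Y = quadH (K1 th) (K2 th) y Y) ->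
  (HamSys H xb Xb <-> forall th,
     has_vderiv xb th (fst (Xb th) + snd (xb th), snd (Xb th) - fst (xb th)) /\
     has_vderiv Xb th (vopp (- snd (Xb th) + K1 th * fst (xb th), fst (Xb th) + K2 th * snd (xb th)))).
Proof. intros HH.
  assert (E : H = fun th y Y => quadH (K1 th) (K2 th) y Y).
  { do 3 (apply functional_extensionality; intro). apply HH. }
  subst H. unfold HamSys. split.
  - intros Hs th. destruct (Hs th) as (gX & gx & A & B & C & D).
    destruct (grad_quadH (K1 th) (K2 th) (xb th) (Xb th)) as [A' B'].
    rewrite (is_grad2_unique _ _ _ _ A A') in C.
    rewrite (is_grad2_unique _ _ _ _ B B') in D. auto.
  - intros Hs th. destruct (Hs th) as [C D].
    destruct (grad_quadH (K1 th) (K2 th) (xb th) (Xb th)) as [A' B'].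
    do 2 eexists. split; [exact A'|]. split; [exact B'|]. auto.
Qed.

Lemma inv_fun (th w : R -> R) c0 : 0 < c0 -> (forall t, derivable_pt_lim th t (w t)) ->
  (forall t, c0 <= w t) ->
  exists g : R -> R, (forall y, th (g y) = y) /\ (forall t, g (th t) = t) /\
     (forall y, derivable_pt_lim g y (1 / w (g y))).
Proof.
  intros Hc Hd Hw.
  pose (pr := (fun t => exist _ (w t) (Hd t)) : derivable th).
  assert (Hinc : forall a b, a < b -> th a + c0 * (b - a) <= th b).
  { intros a b Hab. destruct (MVT_cor1 th a b pr Hab) as (c & E & _).
    change (derive_pt th c (pr c)) with (w c) in E. pose proof (Hw c). nra. }
  assert (Hlt : forall a b, a < b -> th a < th b).
  { intros. pose proof (Hinc a b H). nra. }
  assert (Hcont : continuity th). { intro t. apply derivable_continuous_pt. exact (pr t). }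
  assert (Hsurj : forall y, exists t, th t = y).
  { intro y. set (K := Rabs (y - th 0) + 1). set (T := K / c0).
    assert (HK : 0 < K) by (unfold K; pose proof (Rabs_pos (y - th 0)); lra).
    assert (HT : 0 < T) by (unfold T; apply Rdiv_lt_0_compat; auto).
    assert (H1 : th 0 + K <= th T). { pose proof (Hinc 0 T HT). replace (c0 * (T - 0)) with K in H by (unfold T; field; lra). auto. }
    assert (H2 : th (- T) + K <= th 0). { pose proof (Hinc (-T) 0 ltac:(lra)). replace (c0 * (0 - - T)) with K in H by (unfold T; field; lra). auto. }
    assert (Hy1 : y - th 0 <= Rabs (y - th 0)) by apply RRle_abs.
    assert (Hy2 : - (y - th 0) <= Rabs (y - th 0)) by (rewrite <- Rabs_Ropp; apply RRle_abs).
    destruct (IVT (fun t => th t - y) (- T) T) as (z & _ & Hz).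
    - apply continuity_minus; auto. apply continuity_const. intros ? ?; auto.
    - lra.
    - unfold K in *; lra.
    - unfold K in *; lra.
    - exists z; lra. }
  exists (fun y => proj1_sig (constructive_indefinite_description _ (Hsurj y))).
  set (g := fun y => proj1_sig (constructive_indefinite_description _ (Hsurj y))).
  assert (Hg : forall y, th (g y) = y).
  { intro y; unfold g; exact (proj2_sig (constructive_indefinite_description _ (Hsurj y))). }
  assert (Hinj : forall a b, th a = th b -> a = b).
  { intros a b E. destruct (Rtotal_order a b) as [H|[H|H]]; auto.
    apply Hlt in H; lra. apply Hlt in H; lra. }
  assert (Hg2 : forall t, g (th t) = t) by (intros; apply Hinj; rewrite Hg; auto).
  assert (Hgm : forall x y, x <= y -> g x <= g y).
  { intros x y Hxy. destruct (Rle_or_lt (g x) (g y)); auto.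
    apply Hlt in H. rewrite !Hg in H. lra. }
  split; [exact Hg|]. split; [exact Hg2|].
  intro y.
  assert (Hgc : continuity_pt g y).
  { apply (continuity_pt_recip_interv th g (g y - 1) (g y + 1)); try lra.
    - intros; apply Hlt; lra.
    - intros; unfold comp, id; apply Hg.
    - intros x H1 H2. split.
      + destruct (Rle_or_lt (g y - 1) (g x)); auto. apply Hlt in H. rewrite Hg in H. lra.
      + destruct (Rle_or_lt (g x) (g y + 1)); auto. apply Hlt in H. rewrite Hg in H. lra.
    - intros; apply Hcont.
    - rewrite <- (Hg y) at 2 3. split; apply Hlt; lra. }
  assert (Hincr : g (y - 1) <= g y <= g (y + 1)) by (split; apply Hgm; lra).
  pose proof (derivable_pt_lim_recip_interv th g (y - 1) (y + 1) y (fun a _ => pr a) Hgc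
    ltac:(lra) ltac:(lra) Hincr) as HH.
  simpl in HH. apply HH.
  - intros; unfold comp, id; apply Hg.
  - pose proof (Hw (g y)); lra.
Qed.

Lemma hv_inv (th g w : R -> R) (xb F : R -> vec2) y G :
  (forall y, th (g y) = y) -> (forall y, derivable_pt_lim g y (1 / w (g y))) ->
  (forall s, F s = xb (th s)) -> has_vderiv F (g y) G ->
  has_vderiv xb y (vscal (1 / w (g y)) G).
Proof. intros Hg Hd HF HG.
  apply (hv_ext (fun y => F (g y))). intros; rewrite HF, Hg; auto.
  apply hv_comp; auto. Qed.

Lemma rot_scal th c v : rot th (vscal c v) = vscal c (rot th v).
Proof. veq; ring. Qed.

Lemma pos1e e y : 0 <= e < 1 -> 0 < 1 + e * cos y.
Proof. intros. pose proof (COS_bound y). nra. Qed.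

Definition Ax (sg r rho : R) (xb d : vec2) : vec2 :=
  vadd (vscal (rho / sg) xb) (vscal (sg / r) (vadd d (Jmul xb))).
Definition BB (sg r rho rho' om : R) (xb Xb d D : vec2) : vec2 :=
  vadd (vadd (vscal (-(sg * rho / r ^ 2)) Xb) (vscal (sg * om / r) (vadd D (Jmul Xb))))
       (vadd (vscal (rho' / sg) xb) (vscal (rho * om / sg) (vadd d (Jmul xb)))).

Lemma Ax_inj sg r rho xb d d' : sg / r <> 0 -> Ax sg r rho xb d = Ax sg r rho xb d' -> d = d'.
Proof. intros Hk E. unfold Ax in E. pose proof (f_equal fst E). pose proof (f_equal snd E).
  unfold vadd, vscal, Jmul in *; simpl in *. apply vec_eq; apply (Rmult_eq_reg_l (sg / r)); auto; lra. Qed.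
Lemma BB_inj sg r rho rho' om xb Xb d D D' : sg * om / r <> 0 ->
  BB sg r rho rho' om xb Xb d D = BB sg r rho rho' om xb Xb d D' -> D = D'.
Proof. intros Hk E. unfold BB in E. pose proof (f_equal fst E). pose proof (f_equal snd E).
  unfold vadd, vscal, Jmul in *; simpl in *. apply vec_eq; apply (Rmult_eq_reg_l (sg * om / r)); auto; lra. Qed.


Lemma sys1 (p e sg mu ka : R) (th rdot : R -> R) (xb Xb : R -> vec2) :
  0 < p -> 0 <= e < 1 -> 0 < sg -> mu = sg ^ 4 / p ->
  (forall t, derivable_pt_lim th t (sg ^ 2 / rtheta p e (th t) ^ 2)) ->
  (forall t, derivable_pt_lim (fun s => rtheta p e (th s)) t (rdot t)) ->
  ((forall t, has_vderiv (unbar_pos sg p e th xb) t (unbar_mom sg p e th rdot xb Xb t) /\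
      has_vderiv (unbar_mom sg p e th rdot xb Xb) t
        (vscal (- ka / rtheta p e (th t) ^ 3) (Pf (th t) (unbar_pos sg p e th xb t))))
   <->
   (forall y, has_vderiv xb y (fst (Xb y) + snd (xb y), snd (Xb y) - fst (xb y)) /\
      has_vderiv Xb y (vopp (- snd (Xb y) + (e * cos y - 2 * (ka / mu)) / (1 + e * cos y) * fst (xb y),
                             fst (Xb y) + (e * cos y + ka / mu) / (1 + e * cos y) * snd (xb y))))).
Proof.
  intros Hp He Hs Hmu Hth Hr.
  assert (Hpos : forall y, 0 < 1 + e * cos y) by (intros; apply pos1e; auto).
  assert (Hrpos : forall y, 0 < rtheta p e y).
  { intros; unfold rtheta; apply Rdiv_lt_0_compat; auto. }
  set (om := fun t => sg ^ 2 / rtheta p e (th t) ^ 2).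
  assert (Hrdot : forall t, rdot t = e * sg ^ 2 / p * sin (th t)).
  { intro t. eapply uniqueness_limite; [apply Hr|].
    unfold rtheta. eapply dext. intros; unfold Rdiv at 1; reflexivity.
    eapply deq. apply dcmul, dinv. apply dadd. apply dconst. apply dcmul, dcos, Hth.
    specialize (Hpos (th t)); lra.
    unfold rtheta. specialize (Hpos (th t)). field. split; lra. }
  assert (Hdrdot : forall t, derivable_pt_lim rdot t (e * sg ^ 2 / p * (cos (th t) * om t))).
  { intro t. eapply dext. intros; symmetry; apply Hrdot. apply dcmul, dsin, Hth. }
  assert (CX : forall t d, has_vderiv xb (th t) d ->
     has_vderiv (unbar_pos sg p e th xb) t (rot (th t) (Ax sg (rtheta p e (th t)) (rdot t) (xb (th t)) d))).
  { intros t d Hd. unfold unbar_pos. eapply hv_eq.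
    apply (hv_scal (fun s => rtheta p e (th s) / sg) (fun s => rot (th s) (xb (th s)))).
    apply derivable_pt_lim_div_scal, Hr.
    apply hv_rot. apply Hth. apply hv_comp. apply Hth. exact Hd.
    unfold Ax. specialize (Hrpos (th t)). veq; field; lra. }
  assert (CXX : forall t d D, has_vderiv xb (th t) d -> has_vderiv Xb (th t) D ->
     has_vderiv (unbar_mom sg p e th rdot xb Xb) t
       (rot (th t) (BB sg (rtheta p e (th t)) (rdot t) (e * sg ^ 2 / p * (cos (th t) * om t)) (om t)
                     (xb (th t)) (Xb (th t)) d D))).
  { intros t d D Hd HD. unfold unbar_mom. eapply hv_eq.
    apply hv_rot. apply Hth. apply hv_add.
    apply (hv_scal (fun s => sg / rtheta p e (th s)) (fun s => Xb (th s))).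
    eapply dext. intros; unfold Rdiv at 1; reflexivity. apply dcmul, dinv. apply Hr.
    specialize (Hrpos (th t)); lra.
    apply hv_comp. apply Hth. exact HD.
    apply (hv_scal (fun s => rdot s / sg) (fun s => xb (th s))).
    apply derivable_pt_lim_div_scal, Hdrdot.
    apply hv_comp. apply Hth. exact Hd.
    unfold BB, om. specialize (Hrpos (th t)). veq; field; lra. }
  set (d0 := fun y => (fst (Xb y) + snd (xb y), snd (Xb y) - fst (xb y))).
  set (D0 := fun y => vopp (- snd (Xb y) + (e * cos y - 2 * (ka / mu)) / (1 + e * cos y) * fst (xb y),
                             fst (Xb y) + (e * cos y + ka / mu) / (1 + e * cos y) * snd (xb y))).
  assert (FX : forall t, rot (th t) (Ax sg (rtheta p e (th t)) (rdot t) (xb (th t)) (d0 (th t)))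
                         = unbar_mom sg p e th rdot xb Xb t).
  { intros t. unfold unbar_mom, Ax, d0. specialize (Hrpos (th t)). veq; field; lra. }
  assert (FXX : forall t, rot (th t) (BB sg (rtheta p e (th t)) (rdot t) (e * sg ^ 2 / p * (cos (th t) * om t)) (om t)
                     (xb (th t)) (Xb (th t)) (d0 (th t)) (D0 (th t)))
        = vscal (- ka / rtheta p e (th t) ^ 3) (Pf (th t) (unbar_pos sg p e th xb t))).
  { intros t. unfold unbar_pos. rewrite Pf_rot, <- rot_scal. f_equal.
    unfold BB, D0, d0, om, Pbar. rewrite Hmu. specialize (Hpos (th t)).
    unfold rtheta. veq; field; repeat split; lra. }
  split.
  - intros H y.
    assert (Hc0 : 0 < sg ^ 2 * (1 - e) ^ 2 / p ^ 2).
    { apply Rdiv_lt_0_compat. apply Rmult_lt_0_compat; apply pow_lt; lra. apply pow_lt; lra. }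
    assert (Hom : forall t, sg ^ 2 * (1 - e) ^ 2 / p ^ 2 <= om t).
    { intro t. unfold om, rtheta. pose proof (COS_bound (th t)). specialize (Hpos (th t)).
      replace (sg ^ 2 / (p / (1 + e * cos (th t))) ^ 2) with (sg ^ 2 * (1 + e * cos (th t)) ^ 2 / p ^ 2)
        by (field; lra).
      unfold Rdiv. apply Rmult_le_compat_r. left; apply Rinv_0_lt_compat, pow_lt; lra.
      apply Rmult_le_compat_l. left; apply pow_lt; lra.
      assert (1 - e <= 1 + e * cos (th t)) by nra. simpl. nra. }
    destruct (inv_fun th om _ Hc0 Hth Hom) as (g & Hg & Hg2 & Hgd).
    set (F := fun s => vscal (sg / rtheta p e (th s)) (rot (- th s) (unbar_pos sg p e th xb s))).
    assert (HF : forall s, F s = xb (th s)).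
    { intro s. unfold F, unbar_pos. rewrite rot_scal, rot_inv. specialize (Hrpos (th s)). veq; field; lra. }
    assert (Hsr : forall t, derivable_pt_lim (fun s => sg / rtheta p e (th s)) t
                (sg * (- rdot t / rtheta p e (th t) ^ 2))).
    { intro t. eapply dext. intros; unfold Rdiv at 1; reflexivity. apply dcmul.
      apply (dinv (fun s => rtheta p e (th s))). apply Hr.
      specialize (Hrpos (th t)); lra. }
    assert (HFd : forall t, exists G, has_vderiv F t G).
    { intro t. eexists. unfold F. apply hv_scal. apply Hsr. apply hv_rot. apply dopp, Hth. apply H. }
    set (G := fun s => vscal (rtheta p e (th s) / sg)
                 (vsub (rot (- th s) (unbar_mom sg p e th rdot xb Xb s)) (vscal (rdot s / sg) (F s)))).
    assert (HG : forall s, G s = Xb (th s)).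
    { intro s. unfold G, unbar_mom. rewrite rot_inv, HF. specialize (Hrpos (th s)). veq; field; lra. }
    assert (HGd : forall t, exists G', has_vderiv G t G').
    { intro t. destruct (HFd t) as [FF HFF]. eexists. unfold G. apply hv_scal.
      apply derivable_pt_lim_div_scal, Hr. apply hv_sub. apply hv_rot. apply dopp, Hth. apply H.
      apply hv_scal. apply derivable_pt_lim_div_scal, Hdrdot. exact HFF. }
    set (t := g y).
    destruct (HFd t) as [FF HFF]. destruct (HGd t) as [GG HGG].
    pose proof (hv_inv th g om xb F y FF Hg Hgd HF HFF) as Hd.
    pose proof (hv_inv th g om Xb G y GG Hg Hgd HG HGG) as HD.
    fold t in Hd, HD. rewrite <- (Hg y). fold t. rewrite <- (Hg y) in Hd, HD. fold t in Hd, HD.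
    destruct (H t) as [H1 H2].
    pose proof (CX t _ Hd) as C1. pose proof (CXX t _ _ Hd HD) as C2.
    assert (Hk1 : sg / rtheta p e (th t) <> 0).
    { specialize (Hrpos (th t)). apply Rgt_not_eq, Rdiv_lt_0_compat; lra. }
    assert (Hk2 : sg * om t / rtheta p e (th t) <> 0).
    { specialize (Hrpos (th t)). pose proof (Hom t). apply Rgt_not_eq, Rdiv_lt_0_compat; try lra.
      apply Rmult_lt_0_compat; lra. }
    pose proof (hv_unique _ _ _ _ C1 H1) as E1. rewrite <- FX in E1. apply rot_inj, Ax_inj in E1; auto.
    rewrite E1 in C2.
    pose proof (hv_unique _ _ _ _ C2 H2) as E2. rewrite <- FXX in E2. apply rot_inj, BB_inj in E2; auto.
    rewrite E1 in Hd. rewrite E2 in HD. split; [exact Hd | exact HD].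
  - intros H t. destruct (H (th t)) as [A B]. split.
    + eapply hv_eq. apply CX, A. apply FX.
    + eapply hv_eq. apply CXX; [exact A | exact B]. apply FXX.
Qed.

Lemma term_deriv C (u dl : vec2) r0 : dot u u = 1 -> r0 <> 0 ->
  has_vderiv (fun s => vscal (C / vnorm (vadd (vscal r0 u) (vscal s dl)) ^ 3) (vadd (vscal r0 u) (vscal s dl))) 0
    (vscal (C / Rabs r0 ^ 3) (Pf' u dl)).
Proof. destruct u as [u1 u2], dl as [d1 d2]. intros Hu Hr. unfold has_vderiv, vnorm, Pf', vscal, vadd, vsub; unfold dot in *; simpl in *.
  assert (Hs : sqrt ((r0 * u1 + 0 * d1) * (r0 * u1 + 0 * d1) + (r0 * u2 + 0 * d2) * (r0 * u2 + 0 * d2)) = Rabs r0).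
  { replace ((r0 * u1 + 0 * d1) * (r0 * u1 + 0 * d1) + (r0 * u2 + 0 * d2) * (r0 * u2 + 0 * d2)) with (Rsqr r0).
    apply sqrt_Rsqr_abs. unfold Rsqr. transitivity (r0 * r0 * (u1 * u1 + u2 * u2)). rewrite Hu; ring. ring. }
  assert (Hpos : 0 < (r0 * u1 + 0 * d1) * (r0 * u1 + 0 * d1) + (r0 * u2 + 0 * d2) * (r0 * u2 + 0 * d2)).
  { replace ((r0 * u1 + 0 * d1) * (r0 * u1 + 0 * d1) + (r0 * u2 + 0 * d2) * (r0 * u2 + 0 * d2)) with (r0 * r0 * (u1 * u1 + u2 * u2)) by ring.
    rewrite Hu, Rmult_1_r. apply Rsqr_pos_lt; auto. }
  assert (Ha : Rabs r0 <> 0) by (apply Rabs_no_R0; auto).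
  split; apply is_derive_Reals; auto_derive; rewrite ?Hs; repeat split; auto;
   try (repeat apply Rmult_integral_contrapositive_currified; auto; lra).
  all: destruct (Rle_or_lt 0 r0); [rewrite Rabs_pos_eq in * by lra | rewrite Rabs_left in * by lra]; field; auto; lra.
Qed.

Lemma vsum_fst lo hi f : fst (vsum lo hi f) = rsum lo hi (fun i => fst (f i)).
Proof. apply lvsum_fst. Qed.
Lemma vsum_snd lo hi f : snd (vsum lo hi f) = rsum lo hi (fun i => snd (f i)).
Proof. apply lvsum_snd. Qed.

Lemma vsum_delta lo hi i x : (lo <= i <= hi)%nat -> vsum lo hi (fun j => if Nat.eqb j i then x else vzero) = x.
Proof. intros H. apply vec_eq; [rewrite vsum_fst | rewrite vsum_snd].
  - transitivity (rsum lo hi (fun j => if Nat.eqb j i then fst x else 0)).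
    apply rsum_ext; intros; destruct (Nat.eqb i0 i); reflexivity. apply rsum_delta; auto.
  - transitivity (rsum lo hi (fun j => if Nat.eqb j i then snd x else 0)).
    apply rsum_ext; intros; destruct (Nat.eqb i0 i); reflexivity. apply rsum_delta; auto. Qed.

Lemma vsum_split lo hi i f : (lo <= i <= hi)%nat ->
  vsum lo hi f = vadd (f i) (vsum lo hi (fun j => if Nat.eqb j i then vzero else f j)).
Proof. intros H. transitivity (vadd (vsum lo hi (fun j => if Nat.eqb j i then f i else vzero))
     (vsum lo hi (fun j => if Nat.eqb j i then vzero else f j))).
  rewrite <- vsum_add. apply vsum_ext; intros j _. destruct (Nat.eqb_spec j i); subst; veq; ring.
  rewrite vsum_delta; auto. Qed.

Lemma rsum_split lo hi i f : (lo <= i <= hi)%nat ->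
  rsum lo hi f = f i + rsum lo hi (fun j => if Nat.eqb j i then 0 else f j).
Proof. intros H. transitivity (rsum lo hi (fun j => if Nat.eqb j i then f i else 0)
     + rsum lo hi (fun j => if Nat.eqb j i then 0 else f j)).
  rewrite <- rsum_add. apply rsum_ext; intros j _. destruct (Nat.eqb_spec j i); subst; ring.
  rewrite rsum_delta; auto. Qed.

Lemma vsum_scal lo hi c f : vsum lo hi (fun i => vscal c (f i)) = vscal c (vsum lo hi f).
Proof. symmetry. apply (vsum_lin (vscal c)); intros; veq; ring. Qed.

Lemma vsum_sub lo hi f g : vsum lo hi (fun i => vsub (f i) (g i)) = vsub (vsum lo hi f) (vsum lo hi g).
Proof. transitivity (vsum lo hi (fun i => vadd (f i) (vscal (-1) (g i)))).
  apply vsum_ext; intros; veq; ring. rewrite vsum_add, vsum_scal. veq; ring. Qed.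

Lemma Pf_lin_add th u v : Pf th (vadd u v) = vadd (Pf th u) (Pf th v).
Proof. unfold Pf, Pf'. veq; ring. Qed.
Lemma Pf_lin_zero th : Pf th vzero = vzero.
Proof. unfold Pf, Pf'. veq; ring. Qed.
Lemma Pf_scal th c v : Pf th (vscal c v) = vscal c (Pf th v).
Proof. unfold Pf, Pf'. veq; ring. Qed.

Lemma FL n m a r th (dq : nat -> vec2) i :
  0 < r -> (1 <= i <= n)%nat ->
  (forall j, (1 <= j <= n)%nat -> j <> i -> a j <> a i) ->
  has_vderiv (fun s => force n m i (fun j => vadd (vscal r (rot th (a j, 0))) (vscal s (dq j)))) 0
    (vscal (/ r ^ 3) (Pf th (vsum 1 n (fun j => vscal (Bmat n m a i j) (dq j))))).
Proof.
  intros Hr Hi Ha. unfold force.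
  eapply hv_eq. apply hv_vsum with (G := fun j => if Nat.eqb j i then vzero else
      vscal (/ r ^ 3) (Pf th (vscal (Bmat n m a i j) (vsub (dq j) (dq i))))).
  - intros j Hj. destruct (Nat.eqb_spec j i).
    + split; apply dconst.
    + set (r0 := r * (a j - a i)). set (u := (cos th, sin th)). set (dl := vsub (dq j) (dq i)).
      apply (hv_ext (fun s => vscal (m i * m j / vnorm (vadd (vscal r0 u) (vscal s dl)) ^ 3)
                                    (vadd (vscal r0 u) (vscal s dl)))).
      { intro s. replace (vsub (vadd (vscal r (rot th (a j, 0))) (vscal s (dq j)))
                               (vadd (vscal r (rot th (a i, 0))) (vscal s (dq i))))
                 with (vadd (vscal r0 u) (vscal s dl)) by (unfold r0, u, dl; veq; ring). reflexivity. }
      eapply hv_eq. apply term_deriv.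
      * unfold u, dot; simpl. pose proof (cs1 th). simpl in H. lra.
      * unfold r0. apply Rmult_integral_contrapositive_currified. lra. specialize (Ha j Hj n0). lra.
      * unfold Pf. fold u. unfold Bmat. destruct (Nat.eqb_spec i j); [congruence|].
        assert (HA : Rabs (a i - a j) <> 0). { apply Rabs_no_R0. specialize (Ha j Hj n0). lra. }
        unfold r0. rewrite Rabs_mult, (Rabs_pos_eq r) by lra. rewrite (Rabs_minus_sym (a j)).
        unfold Pf'. veq; field; lra.
  - set (L := fun v => vscal (/ r ^ 3) (Pf th v)).
    transitivity (vsum 1 n (fun j => L (if Nat.eqb j i then vzero else vscal (Bmat n m a i j) (vsub (dq j) (dq i))))).
    { apply vsum_ext; intros j _. destruct (Nat.eqb j i); auto. unfold L. rewrite Pf_lin_zero. veq; ring. }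
    rewrite <- vsum_lin. 2: intros; unfold L; rewrite Pf_lin_add; veq; ring.
    2: unfold L; rewrite Pf_lin_zero; veq; ring.
    unfold L. f_equal. f_equal.
    rewrite (vsum_split 1 n i (fun j => vscal (Bmat n m a i j) (dq j)) Hi).
    transitivity (vsum 1 n (fun j => vsub (if Nat.eqb j i then vzero else vscal (Bmat n m a i j) (dq j))
                                          (vscal (if Nat.eqb j i then 0 else Bmat n m a i j) (dq i)))).
    { apply vsum_ext; intros j _. destruct (Nat.eqb j i); veq; ring. }
    rewrite vsum_sub, vsum_scal_const.
    replace (Bmat n m a i i) with (- rsum 1 n (fun j => if Nat.eqb j i then 0 else Bmat n m a i j)).
    veq; ring.
    unfold Bmat at 2. rewrite Nat.eqb_refl. f_equal. apply rsum_ext; intros l _.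
    destruct (Nat.eqb_spec l i); auto. unfold Bmat. destruct (Nat.eqb_spec i l); auto; congruence.
Qed.

Lemma vscal_vscal c d v : vscal c (vscal d v) = vscal (c * d) v.
Proof. veq; ring. Qed.

Lemma VS lo hi lo' hi' (al : nat -> R) (be : nat -> nat -> R) (y : nat -> vec2) :
  vsum lo hi (fun i => vscal (al i) (vsum lo' hi' (fun k => vscal (be i k) (y k)))) =
  vsum lo' hi' (fun k => vscal (rsum lo hi (fun i => al i * be i k)) (y k)).
Proof.
  transitivity (vsum lo hi (fun i => vsum lo' hi' (fun k => vscal (al i * be i k) (y k)))).
  { apply vsum_ext; intros. rewrite <- vsum_scal. apply vsum_ext; intros. apply vscal_vscal. }
  rewrite vsum_swap. apply vsum_ext; intros. apply vsum_scal_const. Qed.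

Lemma vvec2 a b i : vvec a b 2 i = a i.
Proof. reflexivity. Qed.
Lemma vvec3 a b k i : (3 <= k)%nat -> vvec a b k i = b i k.
Proof. intros. unfold vvec. destruct (Nat.eqb_spec k 1); [lia|]. destruct (Nat.eqb_spec k 2); [lia|]. auto. Qed.

Lemma EX n m a b k (Phi : nat -> vec2) : (2 <= k <= n)%nat ->
  (forall k l, (1 <= k <= n)%nat -> (1 <= l <= n)%nat ->
     rsum 1 n (fun i => vvec a b k i * m i * vvec a b l i) = if Nat.eqb k l then 1 else 0) ->
  vsum 1 n (fun i => vscal (m i * vvec a b k i) (vsum 2 n (fun l => vscal (vvec a b l i) (Phi l)))) = Phi k.
Proof. intros Hk Ho. rewrite VS.
  transitivity (vsum 2 n (fun l => if Nat.eqb l k then Phi k else vzero)).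
  - apply vsum_ext; intros l Hl.
    rewrite (rsum_ext _ _ _ (fun i => vvec a b k i * m i * vvec a b l i)) by (intros; ring).
    rewrite Ho by lia. rewrite Nat.eqb_sym. destruct (Nat.eqb_spec l k); subst; veq; ring.
  - apply vsum_delta; lia. Qed.

Lemma Bdiag n m a i : Bmat n m a i i = - rsum 1 n (fun j => if Nat.eqb j i then 0 else Bmat n m a i j).
Proof. unfold Bmat at 1. rewrite Nat.eqb_refl. f_equal. apply rsum_ext; intros l _.
  destruct (Nat.eqb_spec l i); auto. unfold Bmat. destruct (Nat.eqb_spec i l); auto; congruence. Qed.

Definition nu (n : nat) (m a lam : nat -> R) (k : nat) : R :=
  if Nat.eqb k 2 then - mu n m a else lam k - mu n m a.

Lemma B_eig n m a b lam i k :
  (forall i, (1 <= i <= n)%nat -> 0 < m i) ->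
  (forall i, (1 <= i <= n)%nat ->
     rsum 1 n (fun j => if Nat.eqb j i then 0
                        else m j * (a j - a i) / Rabs (a j - a i) ^ 3)
     = - mu n m a * a i) ->
  (forall k i, (3 <= k <= n)%nat -> (1 <= i <= n)%nat ->
     rsum 1 n (fun j => Dmat n m a i j * b j k) = lam k * b i k) ->
  (1 <= i <= n)%nat -> (2 <= k <= n)%nat ->
  rsum 1 n (fun j => Bmat n m a i j * vvec a b k j) = m i * nu n m a lam k * vvec a b k i.
Proof.
  intros Hm Hc He Hi Hk. pose proof (Hm i Hi) as Hmi.
  destruct (Nat.eq_dec k 2) as [->|Hk2].
  - unfold nu, vvec; simpl.
    rewrite (rsum_split 1 n i _ Hi), Bdiag.
    transitivity (rsum 1 n (fun j => m i * (if Nat.eqb j i then 0 else m j * (a j - a i) / Rabs (a j - a i) ^ 3))).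
    2: rewrite rsum_scal, Hc by auto; ring.
    rewrite (rsum_ext _ _ (fun j => m i * _) (fun j => (if Nat.eqb j i then 0 else Bmat n m a i j * a j)
                 + (- a i) * (if Nat.eqb j i then 0 else Bmat n m a i j))).
    rewrite rsum_add, rsum_scal. ring.
    intros j Hj. destruct (Nat.eqb_spec j i). ring. unfold Bmat. destruct (Nat.eqb_spec i j); [congruence|].
    rewrite (Rabs_minus_sym (a i)). unfold Rdiv. ring.
  - assert (Hk3 : (3 <= k <= n)%nat) by lia.
    unfold nu. destruct (Nat.eqb_spec k 2); [lia|]. rewrite vvec3 by lia.
    rewrite (rsum_ext _ _ _ (fun j => Bmat n m a i j * b j k)) by (intros; rewrite vvec3 by lia; auto).
    pose proof (He k i Hk3 Hi) as E.
    rewrite (rsum_ext _ _ _ (fun j => (if Nat.eqb j i then mu n m a * b i k else 0) + / m i * (Bmat n m a i j * b j k))) in E.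
    2: { intros j _. unfold Dmat. rewrite (Nat.eqb_sym i j). destruct (Nat.eqb_spec j i); subst; field; lra. }
    rewrite rsum_add, rsum_delta, rsum_scal in E by auto.
    apply (Rmult_eq_reg_l (/ m i)). 2: apply Rinv_neq_0_compat; lra.
    replace (/ m i * rsum 1 n (fun j => Bmat n m a i j * b j k)) with (lam k * b i k - mu n m a * b i k) by lra.
    field. lra.
Qed.

Lemma Bsum n m a b lam i r th (y : nat -> vec2) :
  (forall i, (1 <= i <= n)%nat -> 0 < m i) ->
  (forall i, (1 <= i <= n)%nat ->
     rsum 1 n (fun j => if Nat.eqb j i then 0
                        else m j * (a j - a i) / Rabs (a j - a i) ^ 3)
     = - mu n m a * a i) ->
  (forall k i, (3 <= k <= n)%nat -> (1 <= i <= n)%nat ->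
     rsum 1 n (fun j => Dmat n m a i j * b j k) = lam k * b i k) ->
  (1 <= i <= n)%nat ->
  vscal (/ r ^ 3) (Pf th (vsum 1 n (fun j => vscal (Bmat n m a i j) (vsum 2 n (fun l => vscal (vvec a b l j) (y l))))))
  = vscal (m i) (vsum 2 n (fun l => vscal (vvec a b l i) (vscal (nu n m a lam l / r ^ 3) (Pf th (y l))))).
Proof.
  intros Hm Hc He Hi. rewrite VS.
  rewrite (vsum_ext _ _ _ (fun l => vscal (m i * nu n m a lam l * vvec a b l i) (y l))).
  2: { intros l Hl. f_equal. apply B_eig; auto. }
  rewrite (vsum_lin (fun v => Pf th v)). 2: apply Pf_lin_add. 2: apply Pf_lin_zero.
  rewrite <- !vsum_scal. apply vsum_ext; intros l _. rewrite Pf_scal. veq; unfold Rdiv; ring.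
Qed.

Lemma a_mono n (a : nat -> R) : (forall i, (1 <= i < n)%nat -> a i < a (S i)) ->
  forall i j, (1 <= i)%nat -> (i < j)%nat -> (j <= n)%nat -> a i < a j.
Proof. intros H i j Hi Hij Hj. induction j. lia.
  destruct (Nat.eq_dec i j). subst. apply H; lia.
  apply Rlt_trans with (a j). apply IHj; lia. apply H; lia. Qed.

Lemma nbody_red n m a b lam p e th (y Y : nat -> R -> vec2) :
  (2 <= n)%nat ->
  (forall i, (1 <= i <= n)%nat -> 0 < m i) ->
  (forall i, (1 <= i < n)%nat -> a i < a (S i)) ->
  (forall i, (1 <= i <= n)%nat ->
     rsum 1 n (fun j => if Nat.eqb j i then 0
                        else m j * (a j - a i) / Rabs (a j - a i) ^ 3)
     = - mu n m a * a i) ->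
  (forall k i, (3 <= k <= n)%nat -> (1 <= i <= n)%nat ->
     rsum 1 n (fun j => Dmat n m a i j * b j k) = lam k * b i k) ->
  (forall k l, (1 <= k <= n)%nat -> (1 <= l <= n)%nat ->
     rsum 1 n (fun i => vvec a b k i * m i * vvec a b l i)
     = if Nat.eqb k l then 1 else 0) ->
  0 < p -> 0 <= e < 1 ->
  (LinNBody n m (EMsol a p e th) (fun i t => vsum 2 n (fun k => vscal (vvec a b k i) (y k t)))
     (fun i t => vscal (m i) (vsum 2 n (fun k => vscal (vvec a b k i) (Y k t))))
   <-> forall k, (2 <= k <= n)%nat -> forall t, has_vderiv (y k) t (Y k t) /\
        has_vderiv (Y k) t (vscal (nu n m a lam k / rtheta p e (th t) ^ 3) (Pf (th t) (y k t)))).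
Proof.
  intros Hn Hm Ha Hc He Ho Hp He1.
  assert (Hr : forall t, 0 < rtheta p e (th t)).
  { intros; unfold rtheta; apply Rdiv_lt_0_compat; auto; apply pos1e; auto. }
  assert (Hne : forall i, (1 <= i <= n)%nat -> forall j, (1 <= j <= n)%nat -> j <> i -> a j <> a i).
  { intros i Hi j Hj Hji. destruct (Nat.lt_ge_cases j i) as [H|H].
    - assert (a j < a i) by (apply a_mono with n; auto; lia); lra.
    - assert (a i < a j) by (apply a_mono with n; auto; lia); lra. }
  set (dq := fun i t => vsum 2 n (fun k => vscal (vvec a b k i) (y k t))).
  set (Phi := fun t l => vscal (nu n m a lam l / rtheta p e (th t) ^ 3) (Pf (th t) (y l t))).
  set (gv := fun i t => vscal (/ rtheta p e (th t) ^ 3) (Pf (th t) (vsum 1 n (fun j => vscal (Bmat n m a i j) (dq j t))))).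
  assert (Hgv : forall i t, (1 <= i <= n)%nat ->
            gv i t = vscal (m i) (vsum 2 n (fun l => vscal (vvec a b l i) (Phi t l)))).
  { intros i t Hi. unfold gv, dq, Phi. apply Bsum; auto. }
  assert (HFL : forall i t, (1 <= i <= n)%nat ->
     has_vderiv (fun s => force n m i (fun j => vadd (EMsol a p e th j t) (vscal s (dq j t)))) 0 (gv i t)).
  { intros i t Hi. apply FL; auto. }
  split.
  - intros H k Hk t.
    assert (Hdq : forall i, (1 <= i <= n)%nat -> has_vderiv (dq i) t
               (vsum 2 n (fun l => vscal (vvec a b l i) (Y l t)))).
    { intros i Hi. destruct (H t i Hi) as [A _]. eapply hv_eq. exact A.
      rewrite vscal_vscal, Rinv_l by (specialize (Hm i Hi); lra). veq; ring. }
    assert (Hdp : forall i, (1 <= i <= n)%nat -> has_vderiv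
               (fun t => vscal (m i) (vsum 2 n (fun k => vscal (vvec a b k i) (Y k t)))) t (gv i t)).
    { intros i Hi. destruct (H t i Hi) as [_ [g [G1 G2]]].
      rewrite (hv_unique _ _ _ _ G1 (HFL i t Hi)) in G2. exact G2. }
    split.
    + apply (hv_ext (fun s => vsum 1 n (fun i => vscal (m i * vvec a b k i) (dq i s)))).
      { intro s. unfold dq. apply EX; auto. }
      eapply hv_eq. apply hv_vsum. intros i Hi. apply hv_cscal. apply Hdq; auto.
      apply EX; auto.
    + apply (hv_ext (fun s => vsum 1 n (fun i => vscal (vvec a b k i)
                  (vscal (m i) (vsum 2 n (fun l => vscal (vvec a b l i) (Y l s))))))).
      { intro s. rewrite <- (EX n m a b k (fun l => Y l s)) by auto. apply vsum_ext; intros.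
        rewrite vscal_vscal, Rmult_comm. auto. }
      eapply hv_eq. apply hv_vsum. intros i Hi. apply hv_cscal. apply Hdp; auto.
      transitivity (Phi t k). 2: reflexivity.
      rewrite <- (EX n m a b k (Phi t)) by auto. apply vsum_ext; intros i Hi.
      rewrite Hgv by auto. rewrite vscal_vscal, Rmult_comm. auto.
  - intros H t i Hi. split.
    + eapply hv_eq. apply (hv_vsum 2 n (fun k s => vscal (vvec a b k i) (y k s))).
      intros k Hk. apply hv_cscal, H; auto.
      rewrite vscal_vscal, Rinv_l by (specialize (Hm i Hi); lra). veq; ring.
    + exists (gv i t). split. apply HFL; auto.
      rewrite Hgv by auto. apply hv_cscal.
      apply (hv_vsum 2 n (fun k s => vscal (vvec a b k i) (Y k s))).
      intros k Hk. apply hv_cscal, H; auto.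
Qed.

Lemma seq_first lo hi : (lo <= hi)%nat -> seq lo (S hi - lo) = lo :: seq (S lo) (S hi - S lo).
Proof. intros. replace (S hi - lo)%nat with (S (S hi - S lo)) by lia. reflexivity. Qed.
Lemma rsum_first lo hi f : (lo <= hi)%nat -> rsum lo hi f = f lo + rsum (S lo) hi f.
Proof. intros. unfold rsum. rewrite seq_first by auto. reflexivity. Qed.
Lemma vsum_first lo hi f : (lo <= hi)%nat -> vsum lo hi f = vadd (f lo) (vsum (S lo) hi f).
Proof. intros. unfold vsum. rewrite seq_first by auto. reflexivity. Qed.
Lemma rsum_nonneg lo hi f : (forall i, (lo <= i <= hi)%nat -> 0 <= f i) -> 0 <= rsum lo hi f.
Proof. intros H. rewrite rsum_l. assert (H' : forall i, In i (seq lo (S hi - lo)) -> 0 <= f i).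
  { intros; apply H, in_rng; auto. } clear H. induction (seq lo (S hi - lo)) as [|x l IHl]. unfold lsum; simpl; lra.
  rewrite lsum_cons. pose proof (H' x (or_introl eq_refl)). assert (0 <= lsum l f) by (apply IHl; intros; apply H'; right; auto). lra. Qed.

Lemma sys_ham p e sg mu ka c th rdot xb Xb (H : R -> vec2 -> vec2 -> R) :
  0 < p -> 0 <= e < 1 -> 0 < sg -> mu = sg ^ 4 / p ->
  (forall t, derivable_pt_lim th t (sg ^ 2 / rtheta p e (th t) ^ 2)) ->
  (forall t, derivable_pt_lim (fun s => rtheta p e (th s)) t (rdot t)) ->
  c = - ka ->
  (forall y z Z, H y z Z = quadH ((e * cos y - 2 * (ka / mu)) / (1 + e * cos y))
                                  ((e * cos y + ka / mu) / (1 + e * cos y)) z Z) ->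
  ((forall t, has_vderiv (unbar_pos sg p e th xb) t (unbar_mom sg p e th rdot xb Xb t) /\
      has_vderiv (unbar_mom sg p e th rdot xb Xb) t
        (vscal (c / rtheta p e (th t) ^ 3) (Pf (th t) (unbar_pos sg p e th xb t))))
   <-> HamSys H xb Xb).
Proof. intros. subst c. rewrite (HamSys_quad H _ _ xb Xb H7). apply sys1; auto. Qed.

Theorem theorem1p2
  (n : nat) (m a : nat -> R) (b : nat -> nat -> R) (lam : nat -> R)
  (p e : R) (theta rdot : R -> R)
  (zb Zb : R -> vec2) (wb Wb : nat -> R -> vec2) :
  (3 <= n)%nat ->
  (* masses *)
  (forall i, (1 <= i <= n)%nat -> 0 < m i) ->
  rsum 1 n m = 1 ->
  (* collinear central configuration, normalized *)
  (forall i, (1 <= i < n)%nat -> a i < a (S i)) ->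
  rsum 1 n (fun i => m i * a i) = 0 ->
  rsum 1 n (fun i => m i * a i ^ 2) = 1 ->
  (forall i, (1 <= i <= n)%nat ->
     rsum 1 n (fun j => if Nat.eqb j i then 0
                        else m j * (a j - a i) / Rabs (a j - a i) ^ 3)
     = - mu n m a * a i) ->
  (* eigenvectors v_k of D for lambda_k, 3 <= k <= n, ordered decreasingly *)
  (forall k i, (3 <= k <= n)%nat -> (1 <= i <= n)%nat ->
     rsum 1 n (fun j => Dmat n m a i j * b j k) = lam k * b i k) ->
  (forall k, (3 <= k < n)%nat -> lam (S k) <= lam k) ->
  (* v_i^T M v_j = delta_ij, with v_1 = (1,..,1), v_2 = (a_1x,..,a_nx) *)
  (forall k l, (1 <= k <= n)%nat -> (1 <= l <= n)%nat ->
     rsum 1 n (fun i => vvec a b k i * m i * vvec a b l i)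
     = if Nat.eqb k l then 1 else 0) ->
  (* Kepler ellipse r = p/(1+e cos theta), r^2 theta' = sigma^2 *)
  0 < p -> 0 <= e < 1 ->
  (forall t, derivable_pt_lim theta t
       (sigmaK n m a p ^ 2 / rtheta p e (theta t) ^ 2)) ->
  (forall t, derivable_pt_lim (fun s => rtheta p e (theta s)) t (rdot t)) ->
  let sg := sigmaK n m a p in
  let z := unbar_pos sg p e theta zb in
  let Z := unbar_mom sg p e theta rdot zb Zb in
  let w := fun l => unbar_pos sg p e theta (wb l) in
  let W := fun l => unbar_mom sg p e theta rdot (wb l) (Wb l) in
  (LinNBody n m (EMsol a p e theta) (pert_q n a b z w) (pert_p n m a b Z W)
   <->
   (HamSys (H_kepler e) zb Zb /\
    forall l, (1 <= l <= n - 2)%nat ->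
      HamSys (H_euler (- lam (l + 2)%nat / mu n m a) e) (wb l) (Wb l))).
Proof.
  intros Hn Hm Hsum Ha Hcm Hnorm Hc He Hord Ho Hp He1 Hth Hr sg z Z w W.
  assert (Hmu : 0 < mu n m a).
  { unfold mu. rewrite rsum_first by lia.
    assert (H1 : 0 < rsum 2 n (fun j => m 1%nat * m j / Rabs (a 1%nat - a j))).
    { rewrite rsum_first by lia.
      assert (0 < m 1%nat * m 2%nat / Rabs (a 1%nat - a 2%nat)).
      { apply Rdiv_lt_0_compat. apply Rmult_lt_0_compat; apply Hm; lia.
        apply Rabs_pos_lt. pose proof (Ha 1%nat ltac:(lia)). simpl in H. lra. }
      assert (0 <= rsum 3 n (fun j => m 1%nat * m j / Rabs (a 1%nat - a j))).
      { apply rsum_nonneg; intros. apply Rlt_le, Rdiv_lt_0_compat. apply Rmult_lt_0_compat; apply Hm; lia.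
        apply Rabs_pos_lt. assert (a 1%nat < a i) by (apply a_mono with n; auto; lia). lra. }
      lra. }
    assert (0 <= rsum 2 n (fun i => rsum (S i) n (fun j => m i * m j / Rabs (a i - a j)))).
    { apply rsum_nonneg; intros i Hi. apply rsum_nonneg; intros j Hj.
      apply Rlt_le, Rdiv_lt_0_compat. apply Rmult_lt_0_compat; apply Hm; lia.
      apply Rabs_pos_lt. assert (a i < a j) by (apply a_mono with n; auto; lia). lra. }
    lra. }
  assert (Hsg : 0 < sg).
  { unfold sg, sigmaK. apply sqrt_lt_R0, sqrt_lt_R0, Rmult_lt_0_compat; auto. }
  assert (Hsg4 : mu n m a = sg ^ 4 / p).
  { unfold sg, sigmaK. replace (sqrt (sqrt (mu n m a * p)) ^ 4) with
      ((sqrt (sqrt (mu n m a * p)) * sqrt (sqrt (mu n m a * p))) * (sqrt (sqrt (mu n m a * p)) * sqrt (sqrt (mu n m a * p)))) by ring.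
    rewrite sqrt_sqrt. rewrite sqrt_sqrt. field; lra. nra. apply sqrt_pos. }
  set (y := fun k => if Nat.eqb k 2 then z else w (k - 2)%nat).
  set (Y := fun k => if Nat.eqb k 2 then Z else W (k - 2)%nat).
  assert (Eq : pert_q n a b z w = fun i t => vsum 2 n (fun k => vscal (vvec a b k i) (y k t))).
  { apply functional_extensionality; intro i; apply functional_extensionality; intro t.
    unfold pert_q. rewrite (vsum_first 2 n) by lia. f_equal. apply vsum_ext; intros k Hk.
    rewrite vvec3 by lia. unfold y. destruct (Nat.eqb_spec k 2); [lia|]. auto. }
  assert (Ep : pert_p n m a b Z W = fun i t => vscal (m i) (vsum 2 n (fun k => vscal (vvec a b k i) (Y k t)))).
  { apply functional_extensionality; intro i; apply functional_extensionality; intro t.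
    unfold pert_p. rewrite (vsum_first 2 n) by lia. f_equal. f_equal. apply vsum_ext; intros k Hk.
    rewrite vvec3 by lia. unfold Y. destruct (Nat.eqb_spec k 2); [lia|]. auto. }
  rewrite Eq, Ep. rewrite (nbody_red n m a b lam p e theta y Y) by (auto; lia).
  assert (HK : (forall t, has_vderiv (y 2%nat) t (Y 2%nat t) /\
        has_vderiv (Y 2%nat) t (vscal (nu n m a lam 2 / rtheta p e (theta t) ^ 3) (Pf (theta t) (y 2%nat t))))
        <-> HamSys (H_kepler e) zb Zb).
  { apply (sys_ham p e sg (mu n m a) (mu n m a)); auto.
    intros th zz ZZ. unfold H_kepler. pose proof (pos1e e th He1). f_equal; field; lra. }
  assert (HE : forall l, (1 <= l <= n - 2)%nat ->
        ((forall t, has_vderiv (y (l + 2)%nat) t (Y (l + 2)%nat t) /\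
        has_vderiv (Y (l + 2)%nat) t (vscal (nu n m a lam (l + 2) / rtheta p e (theta t) ^ 3)
            (Pf (theta t) (y (l + 2)%nat t))))
        <-> HamSys (H_euler (- lam (l + 2)%nat / mu n m a) e) (wb l) (Wb l))).
  { intros l Hl. unfold y, Y, nu. destruct (Nat.eqb_spec (l + 2) 2); [lia|].
    replace (l + 2 - 2)%nat with l by lia.
    apply (sys_ham p e sg (mu n m a) (mu n m a - lam (l + 2)%nat)); auto.
    ring.
    intros th zz ZZ. unfold H_euler. pose proof (pos1e e th He1). f_equal; field; lra. }
  split.
  - intros H. split.
    + apply HK. apply H. lia.
    + intros l Hl. apply (HE l Hl). apply H. lia.
  - intros [H1 H2] k Hk. destruct (Nat.eq_dec k 2) as [->|Hk2].
    + apply HK; auto.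
    + replace k with ((k - 2) + 2)%nat by lia. apply HE. lia. apply H2. lia.
Qed.
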